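(* Let $\gamma\in CR_{k,m}$ and $n\in\mathbb{N}$, $n\ge1$. Then $\gamma^n\in CR_{k,m}$ and $\gamma^{1/n}\in CR_{k,m}$ (the unique positive semidefinite $n$-th root). Moreover, the orthogonal projection $\delta$ onto $\mathrm{Im}(\gamma)$ belongs to $CR_{k,m}$.
   Context: $\mathcal{M}_k$ denotes the complex $k\times k$ matrices, and $\mathcal{M}_k\otimes\mathcal{M}_m$ is identified with $\mathcal{M}_{km}$ via the Kronecker product. A state is a positive semidefinite Hermitian matrix (not necessarily of trace one). For $\gamma=\sum_{i=1}^nA_i\otimes B_i\in\mathcal{M}_k\otimes\mathcal{M}_m$ define $G_\gamma:\mathcal{M}_k\to\mathcal{M}_m$, $G_\gamma(X)=\sum_i\mathrm{tr}(A_iX)B_i$, and $F_\gamma:\mathcal{M}_m\to\mathcal{M}_k$, $F_\gamma(Y)=\sum_i\mathrm{tr}(B_iY)A_i$. A linear map is positive if it maps positive semidefinite matrices to positive semidefinite matrices, and self-adjoint if self-adjoint with respect to $\langle X,Y\rangle=\mathrm{tr}(XY^* )$. For orthogonal projections $V,W$, $V\mathcal{M}_kW=\{VXW:X\in\mathcal{M}_k\}$. Given an orthogonal projection $V\in\mathcal{M}_k$ and a positive map $T:V\mathcal{M}_kV\to V\mathcal{M}_kV$, $T$ is irreducible if the only orthogonal projections $W$ with $W\mathcal{M}_kW\subseteq V\mathcal{M}_kV$ and $T(W\mathcal{M}_kW)\subseteq W\mathcal{M}_kW$ are $W=0$ and $W=V$. A self-adjoint positive map $T:\mathcal{M}_k\to\mathcal{M}_k$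 is completely reducible if there are orthogonal projections $W_1,\dots,W_l$ with $W_iW_j=0$ for $i\ne j$, $T(W_i\mathcal{M}_kW_i)\subseteq W_i\mathcal{M}_kW_i$ and $T|_{W_i\mathcal{M}_kW_i}$ irreducible for every $i$, and $T|_R\equiv0$, where $R$ is the orthogonal complement (trace inner product) of $\bigoplus_iW_i\mathcal{M}_kW_i$ in $\mathcal{M}_k$. $CR_{k,m}$ is the set of states $\gamma\in\mathcal{M}_k\otimes\mathcal{M}_m$ such that $F_\gamma\circ G_\gamma:\mathcal{M}_k\to\mathcal{M}_k$ is completely reducible. *)

(* Defs.v *)
(* Complex numbers are  R[i]  (mathcomp-real-closed's complex)
   over an arbitrary  R : realType  (so R[i] is the field of complex numbers). *)
From HB Require Import structures.
From mathcomp Require Import all_boot all_order all_algebra.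
From mathcomp Require Import complex mxtens.
From mathcomp Require Import reals.
Set Implicit Arguments. Unset Strict Implicit. Unset Printing Implicit Defensive.
Import Order.TTheory GRing.Theory Num.Theory.
Local Open Scope ring_scope.

Section Defs.
Variable C : numClosedFieldType.

Definition adjmx {p q : nat} (A : 'M[C]_(p, q)) : 'M[C]_(q, p) :=
  (map_mx Num.conj A)^T.

(* a state: positive semidefinite Hermitian matrix (trace not normalized) *)
Definition psd {p : nat} (A : 'M[C]_p) : Prop :=
  adjmx A = A /\ forall v : 'cV[C]_p, 0 <= (adjmx v *m A *m v) 0 0.

Definition orth_proj {p : nat} (P : 'M[C]_p) : Prop :=
  P *m P = P /\ adjmx P = P.

Definition mxdot {p : nat} (X Y : 'M[C]_p) : C := \tr (X *m adjmx Y).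

(* gamma in M_k (x) M_m = M_(k*m) (Kronecker identification via mxtens_index,
   the convention of  tensmx  ( *t ) ).  Its canonical decomposition is
   gamma = \sum_(i,j) E_ij *t block gamma i j ,  with E_ij = delta_mx i j.   *)
Definition block {k m : nat} (g : 'M[C]_(k * m)) (i j : 'I_k) : 'M[C]_m :=
  \matrix_(a, b) g (mxtens_index (i, a)) (mxtens_index (j, b)).

Definition Gmap {k m : nat} (g : 'M[C]_(k * m)) (X : 'M[C]_k) : 'M[C]_m :=
  \sum_(i < k) \sum_(j < k) \tr (delta_mx i j *m X) *: block g i j.

Definition Fmap {k m : nat} (g : 'M[C]_(k * m)) (Y : 'M[C]_m) : 'M[C]_k :=
  \sum_(i < k) \sum_(j < k) \tr (block g i j *m Y) *: delta_mx i j.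

Definition positive_map {p q : nat} (T : 'M[C]_p -> 'M[C]_q) : Prop :=
  forall X, psd X -> psd (T X).

Definition selfadjoint_map {p : nat} (T : 'M[C]_p -> 'M[C]_p) : Prop :=
  forall X Y, mxdot (T X) Y = mxdot X (T Y).

Definition in_corner {p : nat} (V W X : 'M[C]_p) : Prop :=
  exists Y, X = V *m Y *m W.

Definition irreducible_on {p : nat} (T : 'M[C]_p -> 'M[C]_p) (V : 'M[C]_p)
  : Prop :=
  forall W : 'M[C]_p, orth_proj W ->
    (forall X, in_corner V V (W *m X *m W)) ->
    (forall X, in_corner W W (T (W *m X *m W))) ->
    W = 0 \/ W = V.

Definition completely_reducible {p : nat} (T : 'M[C]_p -> 'M[C]_p) : Prop :=
  selfadjoint_map T /\ positive_map T /\
  exists (l : nat) (W : 'I_l -> 'M[C]_p),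
    [/\ (forall i, orth_proj (W i)),
        (forall i j, i != j -> W i *m W j = 0),
        (forall i X, in_corner (W i) (W i) (T (W i *m X *m W i))),
        (forall i, irreducible_on T (W i)) &
        (forall X, (forall i Y, mxdot X (W i *m Y *m W i) = 0) -> T X = 0)].

Definition CR (k m : nat) (g : 'M[C]_(k * m)) : Prop :=
  psd g /\ completely_reducible (fun X => Fmap g (Gmap g X)).

End Defs.

(* Main.v *)
Require Import Defs.
From HB Require Import structures.
From mathcomp Require Import all_boot all_order all_algebra.
From mathcomp Require Import complex mxtens.
From mathcomp Require Import reals.
From mathcomp Require Import sesquilinear spectral.
Set Implicit Arguments. Unset Strict Implicit. Unset Printing Implicit Defensive.
Import Order.TTheory GRing.Theory Num.Theory.
Local Open Scope ring_scope.

Section Aux.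
Variable C : numClosedFieldType.

Lemma adjmxE p q (A : 'M[C]_(p,q)) i j : adjmx A i j = (A j i)^*.
Proof. by rewrite !mxE. Qed.

Lemma adjmxK p q (A : 'M[C]_(p,q)) : adjmx (adjmx A) = A.
Proof. by apply/matrixP=> i j; rewrite !adjmxE conjCK. Qed.

Lemma adjmxM p q r (A : 'M[C]_(p,q)) (B : 'M[C]_(q,r)) :
  adjmx (A *m B) = adjmx B *m adjmx A.
Proof.
apply/matrixP=> i j; rewrite adjmxE !mxE rmorph_sum /=.
by apply: eq_bigr=> s _; rewrite !adjmxE rmorphM /= mulrC.
Qed.

Lemma adjmxD p q (A B : 'M[C]_(p,q)) : adjmx (A + B) = adjmx A + adjmx B.
Proof. by apply/matrixP=> i j; rewrite !mxE rmorphD. Qed.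

Lemma adjmxN p q (A : 'M[C]_(p,q)) : adjmx (- A) = - adjmx A.
Proof. by apply/matrixP=> i j; rewrite !mxE rmorphN. Qed.

Lemma adjmxB p q (A B : 'M[C]_(p,q)) : adjmx (A - B) = adjmx A - adjmx B.
Proof. by rewrite adjmxD adjmxN. Qed.

Lemma adjmx0 p q : adjmx (0 : 'M[C]_(p,q)) = 0.
Proof. by apply/matrixP=> i j; rewrite !mxE rmorph0. Qed.

Lemma adjmx1 p : adjmx (1%:M : 'M[C]_p) = 1%:M.
Proof. by apply/matrixP=> i j; rewrite !mxE rmorph_nat eq_sym. Qed.

Lemma adjmxZ p q a (A : 'M[C]_(p,q)) : adjmx (a *: A) = a^* *: adjmx A.
Proof. by apply/matrixP=> i j; rewrite !mxE rmorphM. Qed.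

Lemma adjmx_sum p q I (r : seq I) (P : pred I) (F : I -> 'M[C]_(p,q)) :
  adjmx (\sum_(i <- r | P i) F i) = \sum_(i <- r | P i) adjmx (F i).
Proof.
elim/big_rec2: _ => [|i y1 y2 _ <-]; first by rewrite adjmx0.
by rewrite adjmxD.
Qed.

Lemma adjmx_tc p q (A : 'M[C]_(p,q)) : (A ^t* )%sesqui = adjmx A.
Proof. by apply/matrixP=> i j; rewrite !mxE. Qed.

Lemma delta_sandwich n (M : 'M[C]_n) s :
  (delta_mx 0 s *m M *m delta_mx s 0 : 'M[C]_1) 0 0 = M s s.
Proof.
rewrite -colE -rowE !mxE. done.
Qed.

Lemma spec_psd n (A : 'M[C]_n) : psd A -> exists (U : 'M[C]_n) (d : 'rV[C]_n),
  [/\ U *m adjmx U = 1%:M, adjmx U *m U = 1%:M, A = adjmx U *m diag_mx d *m U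
    & forall s, 0 <= d 0 s].
Proof.
move=> [hA pA].
have nA : A \is normalmx by rewrite qualifE !adjmx_tc hA.
have /orthomx_spectralP eA := nA.
set U := spectralmx A in eA; set d := spectral_diag A in eA.
have uU : U \is unitarymx by apply: spectral_unitarymx.
have h1 : U *m adjmx U = 1%:M by rewrite -adjmx_tc; apply/unitarymxP.
have h2 : adjmx U *m U = 1%:M.
  by rewrite -adjmx_tc -invmx_unitary // mulVmx // unitarymx_unit.
rewrite invmx_unitary // adjmx_tc in eA.
exists U, d; split=> // s.
have := pA (adjmx U *m delta_mx s 0).
rewrite adjmxM adjmxK.
have -> : adjmx (delta_mx s 0 : 'cV[C]_n) = delta_mx 0 s.
  by apply/matrixP=> i j; rewrite !mxE rmorph_nat andbC.
rewrite !mulmxA -[delta_mx 0 s *m U *m A *m adjmx U]mulmxA.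
rewrite -[delta_mx 0 s *m U *m (A *m adjmx U)]mulmxA.
rewrite eA.
have -> : U *m (adjmx U *m diag_mx d *m U *m adjmx U) = diag_mx d.
  by rewrite !mulmxA h1 mul1mx -mulmxA h1 mulmx1.
by rewrite delta_sandwich mxE eqxx mulr1n.
Qed.


Lemma adj_diag n (a : 'rV[C]_n) : adjmx (diag_mx a) = diag_mx (map_mx Num.conj a).
Proof. by apply/matrixP=> i j; rewrite !mxE rmorphMn eq_sym; have [->|] := eqVneq i j; rewrite ?mulr0n. Qed.

Lemma cnorm_ge0 n (w : 'cV[C]_n) : 0 <= (adjmx w *m w) 0 0.
Proof.
rewrite mxE; apply: sumr_ge0=> s _; rewrite !mxE mulrC; exact: mul_conjC_ge0.
Qed.

Lemma cnorm_eq0 n (w : 'cV[C]_n) : (adjmx w *m w) 0 0 = 0 -> w = 0.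
Proof.
rewrite mxE => h; apply/matrixP=> s j; rewrite ord1 mxE.
have hnn : forall i : 'I_n, predT i -> 0 <= (adjmx w) 0 i * w i 0.
  by move=> i _; rewrite !mxE mulrC; exact: mul_conjC_ge0.
have := @psumr_eq0P _ _ predT (fun s => (adjmx w) 0 s * w s 0) hnn h s isT.
by rewrite !mxE mulrC => /eqP; rewrite mul_conjC_eq0 => /eqP.
Qed.

Section SD.
Variables (n : nat) (U : 'M[C]_n).
Hypotheses (hU1 : U *m adjmx U = 1%:M) (hU2 : adjmx U *m U = 1%:M).
Definition SD (a : 'rV[C]_n) := adjmx U *m diag_mx a *m U.

Lemma SD_mul (a b : 'rV[C]_n) : SD a *m SD b = SD (\row_j (a 0 j * b 0 j)).
Proof.
rewrite /SD -!mulmxA; congr (_ *m _).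
by rewrite [U *m (adjmx U *m _)]mulmxA hU1 mul1mx mulmxA mulmx_diag.
Qed.

Lemma SD_adj (a : 'rV[C]_n) : adjmx (SD a) = SD (map_mx Num.conj a).
Proof. by rewrite /SD !adjmxM adjmxK adj_diag mulmxA. Qed.

Lemma SD_psd (a : 'rV[C]_n) : (forall s, 0 <= a 0 s) -> psd (SD a).
Proof.
move=> ha; split.
  rewrite SD_adj; congr SD; apply/matrixP=> i j; rewrite mxE ord1.
  exact: geC0_conj.
move=> v; set w := U *m v.
have -> : adjmx v *m SD a *m v = adjmx w *m diag_mx a *m w.
  by rewrite /SD /w adjmxM !mulmxA.
rewrite mul_mx_diag mxE; apply: sumr_ge0=> s _; rewrite !mxE.
rewrite mulrAC mulrC; apply: mulr_ge0 => //; rewrite mulrC; exact: mul_conjC_ge0.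
Qed.

Lemma SD_pow (a : 'rV[C]_n) k : (SD a) ^+ k = SD (map_mx (fun x => x ^+ k) a).
Proof.
elim: k => [|k ih].
  rewrite expr0 /SD; have -> : diag_mx (map_mx (fun x => x ^+ 0) a) = 1%:M.
    by apply/matrixP=> i j; rewrite !mxE expr0.
  by rewrite mulmx1 hU2.
rewrite exprS ih -mulmxE SD_mul; congr SD; apply/matrixP=> i j.
by rewrite !mxE ord1 exprS.
Qed.

End SD.

Lemma psd_sqrt n (A : 'M[C]_n) : psd A -> exists Y : 'M[C]_n, A = Y *m adjmx Y.
Proof.
move=> /spec_psd [U [d [h1 h2 -> hd]]].
exists (adjmx U *m diag_mx (map_mx sqrtC d)).
rewrite adjmxM adjmxK adj_diag -!mulmxA; congr (_ *m _).
rewrite !mulmxA mulmx_diag; congr (_ *m _); congr diag_mx.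
apply/matrixP=> i j; rewrite !mxE ord1 (geC0_conj (_ : 0 <= sqrtC _)) ?sqrtC_ge0 //.
by rewrite -expr2 sqrtCK.
Qed.

Lemma psd_root n (A : 'M[C]_n) k : (0 < k)%N -> psd A -> exists r, psd r /\ r ^+ k = A.
Proof.
move=> k0 /spec_psd [U [d [h1 h2 -> hd]]].
exists (SD U (map_mx (fun x => k.-root x) d)); split.
  by apply: SD_psd => // s; rewrite mxE rootC_ge0.
rewrite SD_pow //; congr SD; apply/matrixP=> i j; rewrite !mxE.
by rewrite rootCK.
Qed.

Lemma psd_image n (A : 'M[C]_n) : psd A ->
  exists Q, [/\ orth_proj Q, Q *m A = A & exists S, Q = A *m S].
Proof.
move=> /spec_psd [U [d [h1 h2 -> hd]]].
pose e := \row_j ((d 0 j != 0)%:R : C).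
exists (SD U e); split.
- split.
    rewrite SD_mul //; congr SD; apply/matrixP=> i j; rewrite !mxE.
    by case: (_ != 0); rewrite ?mulr1 ?mulr0.
  rewrite SD_adj //; congr SD; apply/matrixP=> i j; rewrite !mxE.
  by case: (_ != 0); rewrite /= ?rmorph1 ?rmorph0.
- rewrite -/(SD U d) SD_mul //; congr SD; apply/matrixP=> i j; rewrite !mxE.
  rewrite ord1; have [->|] := eqVneq (d 0 j) 0; by rewrite ?mulr1 ?mulr0 ?mul1r.
- exists (SD U (map_mx GRing.inv d)); rewrite -/(SD U d) SD_mul //; congr SD.
  apply/matrixP=> i j; rewrite !mxE.
  have [->|h] := eqVneq (d 0 j) 0; by rewrite ?invr0 ?mulr0 ?divff.
Qed.

Lemma root_comm n (r P : 'M[C]_n) k : (0 < k)%N -> psd r ->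
  P *m r ^+ k = r ^+ k *m P -> P *m r = r *m P.
Proof.
move=> k0 /spec_psd [U [d [h1 h2 -> hd]]].
rewrite -/(SD U d) SD_pow // => hc.
pose P' := U *m P *m adjmx U.
have e1 : P' *m diag_mx (map_mx (fun x => x ^+ k) d) =
          diag_mx (map_mx (fun x => x ^+ k) d) *m P'.
  have hA : forall X : 'M[C]_n, X *m U *m adjmx U = X.
    by move=> X; rewrite -mulmxA h1 mulmx1.
  have hB : forall X : 'M[C]_n, X *m adjmx U *m U = X.
    by move=> X; rewrite -mulmxA h2 mulmx1.
  have := congr1 (fun M => U *m M *m adjmx U) hc; rewrite /= /SD /P'.
  by rewrite !mulmxA hA h1 mul1mx.
have defP : P' = U *m P *m adjmx U by [].
clearbody P'.
have e2 : P' *m diag_mx d = diag_mx d *m P'.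
  apply/matrixP=> i j; move/matrixP: e1 => /(_ i j).
  rewrite !mul_mx_diag !mul_diag_mx !mxE.
  have [->|nz] := eqVneq (P' i j) 0; first by rewrite !(mulr0, mul0r).
  move=> /eqP; rewrite mulrC (inj_eq (mulIf nz)) eqrXn2 // => /eqP ->.
  by rewrite mulrC.
have -> : P = adjmx U *m P' *m U.
  by rewrite defP !mulmxA h2 mul1mx -mulmxA h2 mulmx1.
rewrite /SD -!mulmxA [U *m (adjmx U *m _)]mulmxA h1 mul1mx.
rewrite [U *m (adjmx U *m _)]mulmxA h1 mul1mx !mulmxA; congr (_ *m _).
by rewrite -!mulmxA e2.
Qed.

End Aux.

Section Tens.
Variable C : numClosedFieldType.

Lemma trdelta p (i j : 'I_p) (X : 'M[C]_p) : \tr (delta_mx i j *m X) = X j i.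
Proof.
rewrite /mxtrace (bigD1 i) //= big1 ?addr0.
  rewrite mxE (bigD1 j) //= big1 ?addr0 ?mxE ?eqxx ?mul1r //.
  by move=> s /negbTE hs; rewrite mxE hs andbF mul0r.
move=> s /negbTE hs; rewrite mxE big1 // => t _; rewrite mxE.
by rewrite hs mul0r.
Qed.

Lemma trdeltaR p (i j : 'I_p) (X : 'M[C]_p) : \tr (X *m delta_mx i j) = X j i.
Proof. by rewrite mxtrace_mulC trdelta. Qed.

Lemma nondeg p (M : 'M[C]_p) : (forall N, \tr (M *m N) = 0) -> M = 0.
Proof.
move=> h; apply/matrixP=> i j; rewrite mxE.
by rewrite -(trdeltaR j i M) h.
Qed.

Lemma adjmx_tens p q r s (A : 'M[C]_(p,q)) (B : 'M[C]_(r,s)) :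
  adjmx (A *t B) = adjmx A *t adjmx B.
Proof. by apply/matrixP=> i j; rewrite !mxE rmorphM. Qed.

Lemma tensmxDl p q r s (A B : 'M[C]_(p,q)) (M : 'M[C]_(r,s)) :
  (A + B) *t M = A *t M + B *t M.
Proof. by apply/matrixP=> i j; rewrite !mxE mulrDl. Qed.

Lemma tensmxNl p q r s (A : 'M[C]_(p,q)) (M : 'M[C]_(r,s)) :
  (- A) *t M = - (A *t M).
Proof. by apply/matrixP=> i j; rewrite !mxE mulNr. Qed.

Lemma tensmxBl p q r s (A B : 'M[C]_(p,q)) (M : 'M[C]_(r,s)) :
  (A - B) *t M = A *t M - B *t M.
Proof. by rewrite tensmxDl tensmxNl. Qed.

Lemma tensmxDr p q r s (A : 'M[C]_(p,q)) (M N : 'M[C]_(r,s)) :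
  A *t (M + N) = A *t M + A *t N.
Proof. by apply/matrixP=> i j; rewrite !mxE mulrDr. Qed.

Lemma tensmxNr p q r s (A : 'M[C]_(p,q)) (M : 'M[C]_(r,s)) :
  A *t (- M) = - (A *t M).
Proof. by apply/matrixP=> i j; rewrite !mxE mulrN. Qed.

Lemma tensmxBr p q r s (A : 'M[C]_(p,q)) (M N : 'M[C]_(r,s)) :
  A *t (M - N) = A *t M - A *t N.
Proof. by rewrite tensmxDr tensmxNr. Qed.

Lemma tensmx_suml p q r s I (rr : seq I) (P : pred I) (F : I -> 'M[C]_(p,q))
  (M : 'M[C]_(r,s)) :
  (\sum_(i <- rr | P i) F i) *t M = \sum_(i <- rr | P i) (F i *t M).
Proof.
elim/big_rec2: _ => [|i y1 y2 _ <-]; first by rewrite tens0mx.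
by rewrite tensmxDl.
Qed.

Lemma tensmx11 p q : (1%:M : 'M[C]_p) *t (1%:M : 'M[C]_q) = 1%:M.
Proof.
apply/matrixP=> x y.
case: (mxtens_indexP x) => i a; case: (mxtens_indexP y) => j b.
rewrite tensmxE !mxE (inj_eq (can_inj (@mxtens_indexK p q))) xpair_eqE.
by case: (i == j); case: (a == b); rewrite /= ?mulr1 ?mulr0.
Qed.

Lemma tensmx_delta p q (i j : 'I_p) (a b : 'I_q) :
  (delta_mx i j : 'M[C]_p) *t (delta_mx a b : 'M[C]_q) =
  delta_mx (mxtens_index (i, a)) (mxtens_index (j, b)).
Proof.
apply/matrixP=> x y.
case: (mxtens_indexP x) => i' a'; case: (mxtens_indexP y) => j' b'.
rewrite tensmxE !mxE !(inj_eq (can_inj (@mxtens_indexK p q))) !xpair_eqE.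
by case: (i' == i); case: (j' == j); case: (a' == a); case: (b' == b);
  rewrite /= ?mulr1 ?mulr0.
Qed.

Lemma nondeg_tens p q (M : 'M[C]_(p * q)) :
  (forall (X : 'M[C]_p) (Y : 'M[C]_q), \tr (M *m (X *t Y)) = 0) -> M = 0.
Proof.
move=> h; apply/matrixP=> x y; rewrite mxE.
case: (mxtens_indexP x) => i a; case: (mxtens_indexP y) => j b.
by rewrite -trdeltaR -tensmx_delta h.
Qed.

Lemma sum_tens p q (F : 'I_(p * q) -> C) :
  \sum_(x < p * q) F x = \sum_(i < p) \sum_(a < q) F (mxtens_index (i, a)).
Proof.
rewrite pair_big /=; apply: reindex.
exists (@mxtens_unindex p q) => [[i a]|x] _ /=; first by rewrite mxtens_indexK.
exact: (@mxtens_unindexK p q x).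
Qed.


Lemma trC p (A B : 'M[C]_p) : \tr (A *m B) = \tr (B *m A).
Proof. exact: mxtrace_mulC. Qed.

Lemma mxtrace_sum p I (r : seq I) (P : pred I) (F : I -> 'M[C]_p) :
  \tr (\sum_(i <- r | P i) F i) = \sum_(i <- r | P i) \tr (F i).
Proof.
elim/big_rec2: _ => [|i y1 y2 _ <-]; first by rewrite mxtrace0.
by rewrite mxtraceD.
Qed.

Lemma herm_entry p (A : 'M[C]_p) : adjmx A = A -> forall i j, A i j = (A j i)^*.
Proof. by move=> h i j; rewrite -{1}h mxE mxE. Qed.

Lemma psd_BB p q (B : 'M[C]_(p,q)) : psd (B *m adjmx B).
Proof.
split; first by rewrite adjmxM adjmxK.
move=> v; have -> : adjmx v *m (B *m adjmx B) *m v =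
                   adjmx (adjmx B *m v) *m (adjmx B *m v).
  by rewrite adjmxM adjmxK !mulmxA.
exact: cnorm_ge0.
Qed.

Lemma quad_tr p (M : 'M[C]_p) (v : 'cV[C]_p) :
  (adjmx v *m M *m v) 0 0 = \tr (M *m (v *m adjmx v)).
Proof. by rewrite mulmxA mxtrace_mulC trace_mx11 mulmxA. Qed.

Lemma adj_dcol p (s : 'I_p) : adjmx (delta_mx s 0 : 'cV[C]_p) = delta_mx 0 s.
Proof. by apply/matrixP=> i j; rewrite !mxE rmorph_nat andbC. Qed.

Lemma col_quad p q (A : 'M[C]_p) (B : 'M[C]_(p,q)) s :
  (adjmx B *m A *m B) s s = (adjmx (col s B) *m A *m col s B) 0 0.
Proof.
rewrite colE adjmxM adj_dcol -delta_sandwich !mulmxA.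
by rewrite -[delta_mx 0 s *m adjmx B *m A *m B]mulmxA -[delta_mx 0 s *m adjmx B *m (A *m B)]mulmxA.
Qed.

Lemma tr_psd_ge0 p q (A : 'M[C]_p) (B : 'M[C]_(p,q)) :
  psd A -> 0 <= \tr (A *m (B *m adjmx B)).
Proof.
move=> [_ hA]; rewrite mulmxA mxtrace_mulC mulmxA /mxtrace.
by apply: sumr_ge0 => s _; rewrite col_quad.
Qed.

Lemma psd_quad0 p (A : 'M[C]_p) (v : 'cV[C]_p) : psd A -> (adjmx v *m A *m v) 0 0 = 0 -> A *m v = 0.
Proof.
move=> hA; have [Y eY] := psd_sqrt hA.
rewrite eY => h.
have h1 : adjmx Y *m v = 0.
  apply: cnorm_eq0; move: h; by rewrite adjmxM adjmxK !mulmxA.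
by rewrite -mulmxA h1 mulmx0.
Qed.

Lemma tr_psd0 p q (A : 'M[C]_p) (B : 'M[C]_(p,q)) :
  psd A -> \tr (A *m (B *m adjmx B)) = 0 -> A *m B = 0.
Proof.
move=> hA; rewrite mulmxA mxtrace_mulC mulmxA /mxtrace => h.
have hnn : forall s : 'I_q, predT s -> 0 <= (adjmx B *m A *m B) s s.
  by move=> s _; rewrite col_quad; case: hA.
apply/matrixP=> i s; rewrite mxE.
have := psumr_eq0P hnn h (i:=s) isT; rewrite col_quad => /(psd_quad0 hA).
move/matrixP => /(_ i 0); rewrite colE mulmxA -colE.
by rewrite !mxE.
Qed.

Lemma psd_tr0 p (A B : 'M[C]_p) : psd A -> psd B -> \tr (A *m B) = 0 -> A *m B = 0.
Proof.
move=> hA /psd_sqrt [Y ->] h; by rewrite mulmxA (tr_psd0 hA h) mul0mx.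
Qed.

Lemma frob p q (B : 'M[C]_(p,q)) : \tr (B *m adjmx B) = 0 -> B = 0.
Proof.
move=> h.
have h1 : psd (1%:M : 'M[C]_p) by rewrite -{1}(mulmx1 1%:M) -{2}adjmx1; exact: psd_BB.
by have := tr_psd0 h1 (B := B); rewrite !mul1mx; apply.
Qed.

Lemma op_BB p (P : 'M[C]_p) : orth_proj P -> P = P *m adjmx P.
Proof. by move=> [h1 h2]; rewrite h2 h1. Qed.

Lemma op_psd p (P : 'M[C]_p) : orth_proj P -> psd P.
Proof. by move=> /op_BB ->; exact: psd_BB. Qed.

Lemma op_compl p (P : 'M[C]_p) : orth_proj P -> orth_proj (1%:M - P).
Proof.
move=> [h1 h2]; split; last by rewrite adjmxB adjmx1 h2.
by rewrite mulmxBl !mulmxBr !mul1mx mulmx1 h1 subrr subr0.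
Qed.

Lemma op_tens p q (A : 'M[C]_p) (B : 'M[C]_q) :
  orth_proj A -> orth_proj B -> orth_proj (A *t B).
Proof.
move=> [a1 a2] [b1 b2]; split; first by rewrite tensmx_mul a1 b1.
by rewrite adjmx_tens a2 b2.
Qed.

Lemma adj_herm p q (A : 'M[C]_p) : adjmx A = A -> forall N : 'M[C]_(p,q), adjmx (A *m N) = adjmx N *m A.
Proof. by move=> h N; rewrite adjmxM h. Qed.

Section GF.
Variables k m : nat.
Implicit Types g : 'M[C]_(k * m).

Lemma FmapE g Y : Fmap g Y = \matrix_(i, j) \tr (block g i j *m Y).
Proof.
rewrite [RHS]matrix_sum_delta; apply: eq_bigr => i _; apply: eq_bigr => j _.
by rewrite mxE.
Qed.

Lemma GmapE g X a b : Gmap g X a b =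
  \sum_(i < k) \sum_(j < k) X j i * g (mxtens_index (i, a)) (mxtens_index (j, b)).
Proof.
rewrite /Gmap summxE; apply: eq_bigr => i _; rewrite summxE; apply: eq_bigr => j _.
by rewrite !mxE trdelta.
Qed.

Lemma trblock g i j Y : \tr (block g i j *m Y) =
  \sum_(a < m) \sum_(b < m) g (mxtens_index (i, a)) (mxtens_index (j, b)) * Y b a.
Proof.
rewrite /mxtrace; apply: eq_bigr => a _; rewrite mxE; apply: eq_bigr => b _.
by rewrite mxE.
Qed.

Lemma pair0 g (X : 'M[C]_k) (Y : 'M[C]_m) : \tr (g *m (X *t Y)) =
  \sum_(i < k) \sum_(j < k) X j i * \tr (block g i j *m Y).
Proof.
rewrite /mxtrace sum_tens; apply: eq_bigr => i _.
under eq_bigr => a _ do rewrite mxE sum_tens.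
under eq_bigr => a _ do under eq_bigr => j _ do under eq_bigr => b _ do rewrite tensmxE.
under [RHS]eq_bigr => j _ do rewrite mulr_sumr.
rewrite [RHS]exchange_big; apply: eq_bigr => a _; apply: eq_bigr => j _.
rewrite mxE mulr_sumr; apply: eq_bigr => b _; rewrite mxE !mulrA; congr (_ * _).
by rewrite mulrC.
Qed.

Lemma pairG g X Y : \tr (Gmap g X *m Y) = \tr (g *m (X *t Y)).
Proof.
rewrite pair0 /Gmap mulmx_suml mxtrace_sum; apply: eq_bigr => i _.
rewrite mulmx_suml mxtrace_sum; apply: eq_bigr => j _.
by rewrite -scalemxAl mxtraceZ trdelta.
Qed.

Lemma pairF g X Y : \tr (X *m Fmap g Y) = \tr (g *m (X *t Y)).
Proof.
rewrite pair0 FmapE mxtrace_mulC {1}/mxtrace; apply: eq_bigr => i _.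
rewrite mxE; apply: eq_bigr => j _; rewrite !mxE.
by rewrite mulrC.
Qed.

Lemma adjG g X : adjmx g = g -> adjmx (Gmap g X) = Gmap g (adjmx X).
Proof.
move=> hg; apply/matrixP => a b; rewrite adjmxE !GmapE rmorph_sum /=.
rewrite [RHS]exchange_big; apply: eq_bigr => i _; rewrite rmorph_sum.
apply: eq_bigr => j _; rewrite rmorphM /= !mxE; congr (_ * _).
by rewrite (herm_entry hg (mxtens_index (j, a))).
Qed.

Lemma adjF g Y : adjmx g = g -> adjmx (Fmap g Y) = Fmap g (adjmx Y).
Proof.
move=> hg; apply/matrixP => i j; rewrite adjmxE !FmapE !mxE !trblock rmorph_sum /=.
rewrite [RHS]exchange_big; apply: eq_bigr => a _; rewrite rmorph_sum.
apply: eq_bigr => b _; rewrite rmorphM /= !mxE; congr (_ * _).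
by rewrite (herm_entry hg (mxtens_index (i, b))).
Qed.

Lemma G_psd g X : psd g -> psd X -> psd (Gmap g X).
Proof.
move=> hg hX; split; first by rewrite adjG; [case: hX => -> | case: hg].
move=> v; rewrite quad_tr pairG.
have [Y ->] := psd_sqrt hX.
rewrite -tensmx_mul -adjmx_tens; exact: tr_psd_ge0.
Qed.

Lemma F_psd g Y : psd g -> psd Y -> psd (Fmap g Y).
Proof.
move=> hg hY; split; first by rewrite adjF; [case: hY => -> | case: hg].
move=> v; rewrite quad_tr mxtrace_mulC pairF.
have [Z ->] := psd_sqrt hY.
rewrite -tensmx_mul -adjmx_tens; exact: tr_psd_ge0.
Qed.

Lemma T_pos g : psd g -> positive_map (fun X => Fmap g (Gmap g X)).
Proof. by move=> hg X hX; apply: F_psd => //; apply: G_psd. Qed.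

Lemma T_sa g : adjmx g = g -> selfadjoint_map (fun X => Fmap g (Gmap g X)).
Proof.
move=> hg X Y; rewrite /mxdot /=.
rewrite mxtrace_mulC pairF -pairG.
rewrite adjF // adjG // pairF -pairG mxtrace_mulC.
by [].
Qed.

End GF.
Lemma killL p (g P M : 'M[C]_p) : P *m g = 0 -> \tr (g *m (M *m P)) = 0.
Proof. by move=> h; rewrite mulmxA mxtrace_mulC mulmxA h mul0mx mxtrace0. Qed.

Lemma killR p (g P M : 'M[C]_p) : g *m P = 0 -> \tr (g *m (P *m M)) = 0.
Proof. by move=> h; rewrite mulmxA h mul0mx mxtrace0. Qed.

Lemma herm_kill p (g P : 'M[C]_p) : adjmx g = g -> adjmx P = P ->
  g *m P = 0 -> P *m g = 0.
Proof. by move=> hg hP h; rewrite -hg -hP -adjmxM h adjmx0. Qed.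

Lemma complL p (Q Z : 'M[C]_p) : (1%:M - Q) *m Z = 0 -> Z = Q *m Z.
Proof. by rewrite mulmxBl mul1mx => /subr0_eq. Qed.

Lemma complR p (Q Z : 'M[C]_p) : Z *m (1%:M - Q) = 0 -> Z = Z *m Q.
Proof. by rewrite mulmxBr mulmx1 => /subr0_eq. Qed.

Lemma op_herm p (P : 'M[C]_p) : orth_proj P -> adjmx P = P.
Proof. by case. Qed.

Section GF2.
Variables k m : nat.
Implicit Types g : 'M[C]_(k * m).

Lemma invB g (W : 'M[C]_k) (Q : 'M[C]_m) : adjmx g = g -> orth_proj W -> orth_proj Q ->
  g *m (W *t (1%:M - Q)) = 0 -> g *m ((1%:M - W) *t Q) = 0 ->
  forall X, in_corner W W (Fmap g (Gmap g (W *m X *m W))).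
Proof.
move=> hg oW oQ h1 h2 X.
have oW' := op_compl oW; have oQ' := op_compl oQ.
have h1' := herm_kill hg (op_herm (op_tens oW oQ')) h1.
have h2' := herm_kill hg (op_herm (op_tens oW' oQ)) h2.
set Z := Gmap g (W *m X *m W).
have hZ1 : (1%:M - Q) *m Z = 0.
  apply: nondeg => N; rewrite -mulmxA mxtrace_mulC -mulmxA pairG.
  have -> : (W *m X *m W) *t (N *m (1%:M - Q)) = ((W *m X) *t N) *m (W *t (1%:M - Q)).
    by rewrite tensmx_mul.
  exact: killL.
have hZ2 : Z *m (1%:M - Q) = 0.
  apply: nondeg => N; rewrite -mulmxA pairG.
  have -> : (W *m X *m W) *t ((1%:M - Q) *m N) = (W *t (1%:M - Q)) *m ((X *m W) *t N).
    by rewrite tensmx_mul mulmxA.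
  exact: killR.
have eZ : Z = Q *m Z *m Q by rewrite -(complL hZ1) -(complR hZ2).
set F := Fmap g Z.
have hF1 : (1%:M - W) *m F = 0.
  apply: nondeg => N; rewrite -mulmxA mxtrace_mulC -mulmxA [\tr (F *m _)]mxtrace_mulC pairF eZ.
  have -> : (N *m (1%:M - W)) *t (Q *m Z *m Q) = (N *t (Q *m Z)) *m ((1%:M - W) *t Q).
    by rewrite tensmx_mul.
  exact: killL.
have hF2 : F *m (1%:M - W) = 0.
  apply: nondeg => N; rewrite -mulmxA mxtrace_mulC pairF eZ.
  have -> : ((1%:M - W) *m N) *t (Q *m Z *m Q) = ((1%:M - W) *t Q) *m (N *t (Z *m Q)).
    by rewrite tensmx_mul -mulmxA.
  exact: killR.
exists F; by rewrite -(complL hF1) -(complR hF2).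
Qed.

Lemma invA g (W : 'M[C]_k) : psd g -> orth_proj W ->
  (forall X, in_corner W W (Fmap g (Gmap g (W *m X *m W)))) ->
  exists Q : 'M[C]_m, [/\ orth_proj Q, g *m (W *t (1%:M - Q)) = 0 &
                         g *m ((1%:M - W) *t Q) = 0].
Proof.
move=> hg oW h.
have oW' := op_compl oW.
have [Y eY] := h 1%:M.
rewrite mulmx1 oW.1 in eY.
have e1 : (1%:M - W) *m Fmap g (Gmap g W) = 0.
  by rewrite eY !mulmxA mulmxBl mul1mx oW.1 subrr !mul0mx.
have pA := G_psd hg (op_psd oW); have pB := G_psd hg (op_psd oW').
have e2 : Gmap g (1%:M - W) *m Gmap g W = 0.
  apply: psd_tr0 => //; by rewrite pairG -pairF e1 mxtrace0.
have [Q [oQ eQ [S eS]]] := psd_image pA.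
have e3 : Q *m Gmap g (1%:M - W) = 0.
  have -> : Q = adjmx S *m Gmap g W.
    by rewrite -(op_herm oQ) eS adjmxM (proj1 pA).
  rewrite -mulmxA.
  have -> : Gmap g W *m Gmap g (1%:M - W) = 0.
    by rewrite -(proj1 pA) -(proj1 pB) -adjmxM e2 adjmx0.
  by rewrite mulmx0.
have oQ' := op_compl oQ.
exists Q; split => //.
  have oB := op_tens oW oQ'.
  apply: (tr_psd0 hg); rewrite -(op_BB oB) -pairG mulmxBr mulmx1 raddfB /=.
  by rewrite mxtrace_mulC eQ subrr.
have oB := op_tens oW' oQ.
by apply: (tr_psd0 hg); rewrite -(op_BB oB) -pairG mxtrace_mulC e3 mxtrace0.
Qed.

End GF2.
Lemma op1 p : orth_proj (1%:M : 'M[C]_p).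
Proof. by split; rewrite ?mulmx1 ?adjmx1. Qed.

Lemma sumW_l p l (W : 'I_l -> 'M[C]_p) : (forall i, orth_proj (W i)) ->
  (forall i j, i != j -> W i *m W j = 0) -> forall i, (\sum_j W j) *m W i = W i.
Proof.
move=> h1 h2 i; rewrite mulmx_suml (bigD1 i) //= (h1 i).1 big1 ?addr0 // => j hj.
exact: h2.
Qed.

Lemma sumW_r p l (W : 'I_l -> 'M[C]_p) : (forall i, orth_proj (W i)) ->
  (forall i j, i != j -> W i *m W j = 0) -> forall i, W i *m (\sum_j W j) = W i.
Proof.
move=> h1 h2 i; rewrite mulmx_sumr (bigD1 i) //= (h1 i).1 big1 ?addr0 // => j hj.
by apply: h2; rewrite eq_sym.
Qed.

Lemma op_sum p l (W : 'I_l -> 'M[C]_p) : (forall i, orth_proj (W i)) ->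
  (forall i j, i != j -> W i *m W j = 0) -> orth_proj (\sum_j W j).
Proof.
move=> h1 h2; split.
  by rewrite mulmx_suml; apply: eq_bigr => i _; rewrite sumW_r.
by rewrite adjmx_sum; apply: eq_bigr => i _; rewrite (h1 i).2.
Qed.

Lemma adj_sand p (A Y B : 'M[C]_p) : adjmx (A *m Y *m B) = adjmx B *m adjmx Y *m adjmx A.
Proof. by rewrite !adjmxM mulmxA. Qed.

Section GF3.
Variables k m : nat.
Implicit Types g : 'M[C]_(k * m).

Lemma Fmap0 g : Fmap g 0 = 0.
Proof. by rewrite FmapE; apply/matrixP=> i j; rewrite !mxE mulmx0 mxtrace0. Qed.

Lemma GX0 g X : adjmx g = g -> Fmap g (Gmap g X) = 0 -> Gmap g X = 0.
Proof.
move=> hg h; apply: frob.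
have := congr1 (fun M => \tr (adjmx X *m M)) h; rewrite /= mulmx0 mxtrace0.
by rewrite pairF -pairG -adjG // mxtrace_mulC.
Qed.

Lemma transfer g g' : psd g -> psd g' ->
  (forall M : 'M[C]_(k * m), g *m M = 0 <-> g' *m M = 0) ->
  (forall P : 'M[C]_(k * m), orth_proj P -> P *m g = g *m P -> P *m g' = g' *m P) ->
  CR g -> CR g'.
Proof.
move=> hg hg' hK hC [_ [sa [pos [l [W [hW1 hW2 hW3 hW4 hW5]]]]]].
split => //; split; first exact: T_sa (proj1 hg').
split; first exact: T_pos hg'.
exists l, W; split => //.
- move=> i; have [Q [oQ e1 e2]] := invA hg (hW1 i) (hW3 i).
  by apply: invB (proj1 hg') (hW1 i) oQ _ _; apply/hK.
- move=> i W' oW' hsub hinv; apply: (hW4 i W' oW' hsub).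
  have [Q [oQ e1 e2]] := invA hg' oW' hinv.
  by apply: invB (proj1 hg) oW' oQ _ _; apply/hK.
move=> X hX.
have oS := op_sum hW1 hW2.
pose W0 := 1%:M - \sum_j W j.
have oW0 : orth_proj W0 := op_compl oS.
have W0W : forall i, W0 *m W i = 0.
  by move=> i; rewrite /W0 mulmxBl mul1mx sumW_l // subrr.
have hT0 : Fmap g (Gmap g W0) = 0.
  apply: hW5 => i Y; rewrite /mxdot adj_sand (op_herm (hW1 i)).
  by rewrite !mulmxA W0W !mul0mx mxtrace0.
have hG0 := GX0 (proj1 hg) hT0.
pose P0 := W0 *t (1%:M : 'M[C]_m).
have oP0 : orth_proj P0 := op_tens oW0 (op1 m).
have gP0 : g *m P0 = 0.
  by apply: (tr_psd0 hg); rewrite -(op_BB oP0) -pairG hG0 mul0mx mxtrace0.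
have P0g : P0 *m g = 0 := herm_kill (proj1 hg) (op_herm oP0) gP0.
pose P := fun i => W i *t (1%:M : 'M[C]_m).
have oP : forall i, orth_proj (P i) by move=> i; exact: op_tens (hW1 i) (op1 m).
have Psum : \sum_i P i + P0 = 1%:M.
  by rewrite /P0 /P -tensmx_suml -tensmxDl /W0 addrC subrK tensmx11.
have Pij : forall i j, i != j -> P j *m g *m P i = 0.
  move=> i j hij; apply: nondeg_tens => Y N.
  rewrite -!mulmxA mxtrace_mulC -!mulmxA /P !tensmx_mul -pairG.
  suff -> : Gmap g (W i *m (Y *m W j)) = 0 by rewrite mul0mx mxtrace0.
  apply: GX0 (proj1 hg) _; apply: hW5 => s Z; rewrite /mxdot adj_sand (op_herm (hW1 s)).
  have [->|hs] := eqVneq s j.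
    rewrite !mulmxA mxtrace_mulC !mulmxA (hW2 j i); last by rewrite eq_sym.
    by rewrite !mul0mx mxtrace0.
  rewrite !mulmxA -[_ *m W j *m W s]mulmxA (hW2 j s); last by rewrite eq_sym.
  by rewrite mulmx0 !mul0mx mxtrace0.
have Pcomm : forall i, P i *m g = g *m P i.
  move=> i.
  have e1 : P i *m g = P i *m g *m P i.
    rewrite -{1}(mulmx1 (P i *m g)) -Psum mulmxDr -[P i *m g *m P0]mulmxA gP0 mulmx0 addr0.
    rewrite mulmx_sumr (bigD1 i) //= big1 ?addr0 // => j hj.
    exact: Pij hj.
  have e2 : g *m P i = P i *m g *m P i.
    rewrite -{1}(mul1mx (g *m P i)) -Psum mulmxDl [P0 *m (g *m P i)]mulmxA P0g mul0mx addr0.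
    rewrite mulmx_suml (bigD1 i) //= big1 ?addr0 ?mulmxA // => j hj.
    by rewrite mulmxA; apply: Pij; rewrite eq_sym.
  by rewrite e1 e2.
have g'P0 : g' *m P0 = 0 by apply/hK.
have g'comm : forall i, P i *m g' = g' *m P i.
  by move=> i; apply: hC (oP i) (Pcomm i).
have WXW : forall i, W i *m X *m W i = 0.
  move=> i; apply: nondeg => N; have := hX i (adjmx N).
  rewrite /mxdot adj_sand adjmxK !(op_herm (hW1 i)).
  by rewrite !mulmxA [\tr (_ *m W i)]trC !mulmxA.
suff -> : Gmap g' X = 0 by rewrite Fmap0.
apply: nondeg => N; rewrite pairG.
rewrite -[g']mulmx1 -Psum mulmxDr mulmx_sumr g'P0 addr0 mulmx_suml mxtrace_sum.
rewrite big1 // => i _.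
rewrite -(oP i).1 mulmxA -g'comm -!mulmxA trC -mulmxA /P !tensmx_mul.
by rewrite WXW tens0mx mulmx0 mxtrace0.
Qed.

End GF3.
End Tens.

Section Pow.
Variable C : numClosedFieldType.

Lemma psd_pow p (A : 'M[C]_p) n : psd A -> psd (A ^+ n).
Proof.
move=> /spec_psd [U [d [h1 h2 -> hd]]].
rewrite -/(SD U d) SD_pow //; apply: SD_psd => // s; rewrite mxE.
exact: exprn_ge0.
Qed.

Lemma sq_ker p (B M : 'M[C]_p) : adjmx B = B -> B *m (B *m M) = 0 -> B *m M = 0.
Proof.
move=> hB h; rewrite -[B *m M]adjmxK.
have -> : adjmx (B *m M) = 0; last by rewrite adjmx0.
apply: frob; rewrite adjmxK adjmxM hB -mulmxA h mulmx0 mxtrace0 //.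
Qed.

Lemma adjmx_pow p (A : 'M[C]_p) n : adjmx A = A -> adjmx (A ^+ n) = A ^+ n.
Proof.
move=> hA; elim: n => [|n ih]; first by rewrite !expr0 adjmx1.
by rewrite {1}exprS -mulmxE adjmxM ih hA mulmxE -exprSr.
Qed.

Lemma pow_ker p (A M : 'M[C]_p) n : adjmx A = A -> (0 < n)%N ->
  A ^+ n *m M = 0 -> A *m M = 0.
Proof.
move=> hA; case: n => // n _; elim: n => [|n ih]; first by rewrite expr1.
move=> h; apply: ih.
apply: sq_ker; first exact: adjmx_pow.
rewrite mulmxA mulmxE -exprD.
have -> : (n.+1 + n.+1 = n + n.+2)%N by rewrite addSnnS.
by rewrite exprD -mulrA -mulmxE h mulmx0.
Qed.

Lemma pow_ker_inv p (A M : 'M[C]_p) n : (0 < n)%N -> A *m M = 0 -> A ^+ n *m M = 0.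
Proof.
by case: n => // n _ h; rewrite exprSr -mulmxE -mulmxA h mulmx0.
Qed.

Lemma pow_comm p (A P : 'M[C]_p) n : P *m A = A *m P -> P *m A ^+ n = A ^+ n *m P.
Proof.
move=> h; rewrite !mulmxE; apply: commrX.
by rewrite /GRing.comm -!mulmxE.
Qed.

End Pow.

Theorem mainTheorem11 (R : realType) (k m n : nat) (g : 'M[R[i]]_(k * m)) :
  CR g -> (1 <= n)%N ->
  [/\ CR (g ^+ n),
      (* gamma^(1/n): the positive semidefinite n-th root exists, and (it being
         unique) every positive semidefinite n-th root of gamma lies in CR *)
      (exists r : 'M[R[i]]_(k * m), psd r /\ r ^+ n = g) /\
      (forall r : 'M[R[i]]_(k * m), psd r -> r ^+ n = g -> CR r) &
      (* the orthogonal projection onto Im(gamma) exists and lies in CR *)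
      (exists d : 'M[R[i]]_(k * m), orth_proj d /\ (d^T == g^T)%MS) /\
      (forall d : 'M[R[i]]_(k * m), orth_proj d -> (d^T == g^T)%MS -> CR d)].
Proof.
move=> hCR hn; have hg := proj1 hCR.
split.
- apply: (transfer hg (psd_pow n hg) _ _ hCR).
    move=> M; split; first exact: pow_ker_inv.
    exact: pow_ker (proj1 hg) hn.
  by move=> P _ hP; apply: pow_comm.
- split; first exact: psd_root.
  move=> r hr hrn; apply: (transfer hg hr _ _ hCR).
    move=> M; rewrite -hrn; split; first exact: pow_ker (proj1 hr) hn.
    exact: pow_ker_inv.
  by move=> P _; rewrite -hrn; apply: root_comm.
split.
  have [Q [oQ eQ [S eS]]] := psd_image hg.
  exists Q; split => //; apply/andP; split.
    by rewrite eS trmx_mul submxMl.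
  by rewrite -{1}eQ trmx_mul submxMl.
move=> d hd /andP [/submxP [D1 e1] /submxP [D2 e2]].
have ed : d = g *m D1^T by rewrite -[d]trmxK e1 trmx_mul trmxK.
have eg : g = d *m D2^T by rewrite -[g]trmxK e2 trmx_mul trmxK.
have hgH := proj1 hg; have hdH := op_herm hd.
have ed' : d = adjmx (D1^T) *m g by rewrite -hdH ed adjmxM hgH.
have eg' : g = adjmx (D2^T) *m d by rewrite -hgH eg adjmxM hdH.
apply: (transfer hg (op_psd hd) _ _ hCR).
  move=> M; split => h.
    by rewrite ed' -mulmxA h mulmx0.
  by rewrite eg' -mulmxA h mulmx0.
move=> P oP hP.
have dg : d *m g = g by rewrite {2}eg {1}eg mulmxA hd.1.
have e3 : P *m d = d *m (P *m d).
  have e4 : P *m d = g *m P *m D1^T by rewrite {1}ed mulmxA hP.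
  by rewrite e4 !mulmxA dg.
have e5 : d *m P = d *m P *m d.
  have -> : d *m P = adjmx (P *m d) by rewrite adjmxM hdH (op_herm oP).
  by rewrite {1}e3 adjmxM adjmxM hdH (op_herm oP) adjmxM hdH (op_herm oP).
by rewrite e3 mulmxA -e5.
Qed.
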